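(* Let $K$ be an algebraically closed field of characteristic zero, $\deg_1$ the standard homogeneous degree on $K[x_1,\dots,x_n]$, $\Phi=(f_1,\dots,f_n)$ a polynomial automorphism of $K^n$, $d_i=\deg_1(f_i)$, and $\nabla=d_1+\dots+d_n-n$. Then for every $P\in K[x_1,\dots,x_n]$, $\deg_1(P\circ\Phi)\ge\deg_1(\frac{\partial P}{\partial x_n}\circ\Phi)+d_n-\nabla$, and more generally $\deg_1(P\circ\Phi)\ge\deg_1(\frac{\partial^kP}{\partial x_n^k}\circ\Phi)+kd_n-k\nabla$ for all $k\ge 0$. *)

(* Defs.v *)
From mathcomp Require Import all_boot all_order all_algebra.
From mathcomp Require Export mpoly.
Set Implicit Arguments. Unset Strict Implicit. Unset Printing Implicit Defensive.
Import GRing.Theory Num.Theory.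
Local Open Scope ring_scope.

(* Standard total (homogeneous) degree deg_1 of a nonzero polynomial:
   msize p = 1 + deg p for p <> 0. *)
Definition deg1 (n : nat) (R : ringType) (p : {mpoly R[n]}) : nat := (msize p).-1.

Definition poly_automorphism (n : nat) (K : comRingType)
  (Phi : n.-tuple {mpoly K[n]}) : Prop :=
  exists Psi : n.-tuple {mpoly K[n]},
    (forall i : 'I_n, (tnth Phi i) \mPo Psi = 'X_i) /\
    (forall i : 'I_n, (tnth Psi i) \mPo Phi = 'X_i).

(* Main.v *)
Require Import Defs.
From mathcomp Require Import all_boot all_order all_algebra.
From mathcomp Require Import mpoly ring zify.
Import GRing.Theory Num.Theory.
Local Open Scope ring_scope.
Set Implicit Arguments. Unset Strict Implicit. Unset Printing Implicit Defensive.

Section Chain.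
Context (R : comRingType) (n k : nat) (lq : n.-tuple {mpoly R[k]}).

Definition chain (p : {mpoly R[n]}) := forall j : 'I_k,
  (p \mPo lq)^`M(j) = \sum_(i < n) (p^`M(i) \mPo lq) * (tnth lq i)^`M(j).

Lemma chain_lin c p q : chain p -> chain q -> chain (c *: p + q).
Proof.
move=> hp hq j; rewrite raddfD /= comp_mpolyZ raddfD /= mderivZ hp hq.
rewrite scaler_sumr -big_split /=; apply: eq_bigr => i _.
by rewrite mderivD mderivZ comp_mpolyD comp_mpolyZ mulrDl scalerAl.
Qed.

Lemma chain_mul p q : chain p -> chain q -> chain (p * q).
Proof.
move=> hp hq j; rewrite rmorphM /= mderivM hp hq mulr_suml mulr_sumr -big_split /=.
apply: eq_bigr => i _; rewrite mderivM rmorphD /= !rmorphM /=; ring.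
Qed.

Lemma chain1 : chain 1.
Proof.
move=> j; rewrite rmorph1 -mpolyC1 mderivC big1 // => i _.
by rewrite mderivC comp_mpolyC mpolyC0 mul0r.
Qed.

Lemma submm' (m : 'X_{1..n}) : (m - m = 0)%MM.
Proof. by apply/mnmP=> l; rewrite !mnmE subnn. Qed.

Lemma chainX i : chain 'X_i.
Proof.
move=> j; rewrite comp_mpolyXU -tnth_nth (bigD1 i) //= big1 => [|l nil].
  by rewrite mderivX mnm1E eqxx submm' mpolyX0 scale1r comp_mpoly1 mul1r addr0.
by rewrite mderivX mnm1E eq_sym (negbTE nil) scale0r comp_mpoly0 mul0r.
Qed.

Lemma chain_all p : chain p.
Proof.
elim/mpolyind: p => [j|c m p _ _ hp]; first by rewrite !raddf0 /= big1 // => i _; rewrite mderiv0 comp_mpoly0 mul0r.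
apply: chain_lin => //; rewrite mpolyXE_id.
apply: (big_ind chain); [exact: chain1|exact: chain_mul|] => i _.
elim: (m i) => [|e ih]; first by rewrite expr0; exact: chain1.
by rewrite exprS; apply: chain_mul => //; exact: chainX.
Qed.
End Chain.
Lemma comp_assoc (R : comRingType) n k l (p : {mpoly R[n]}) (lq : n.-tuple {mpoly R[k]})
  (lr : k.-tuple {mpoly R[l]}) :
  (p \mPo lq) \mPo lr = p \mPo [tuple tnth lq i \mPo lr | i < n].
Proof.
rewrite (comp_mpolyE p lq) raddf_sum comp_mpolyE; apply: eq_bigr => m _ /=.
rewrite comp_mpolyZ rmorph_prod; congr (_ *: _); apply: eq_bigr => i _.
by rewrite rmorphXn tnth_mktuple.
Qed.

Lemma msize_deriv (R : ringType) n (p : {mpoly R[n]}) i :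
  (msize (p^`M(i)) <= (msize p).-1)%N.
Proof.
rewrite [X in (X <= _)%N]msizeE; apply/bigmax_leqP_seq => m hm _.
move: hm; rewrite mcoeff_msupp mcoeff_deriv => hm.
have : (m + U_(i))%MM \in msupp p.
  by rewrite mcoeff_msupp; apply: contraNneq hm => ->; rewrite mul0rn.
move/msize_mdeg_lt; rewrite mdegD mdeg1 addn1.
by case: (msize p).
Qed.

Definition degle (R : ringType) n (D : nat) (p : {mpoly R[n]}) := (msize p <= D.+1)%N.
Arguments degle {R n}.

Section Deg.
Context (R : idomainType) (n : nat).
Implicit Types p q : {mpoly R[n]}.

Lemma degleM a b p q : degle a p -> degle b q -> degle (a + b) (p * q).
Proof.
rewrite /degle => hp hq.
have [->|p0] := eqVneq p 0; first by rewrite mul0r msize0.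
have [->|q0] := eqVneq q 0; first by rewrite mulr0 msize0.
rewrite msizeM //; move: hp hq; case: (msize p) => [|x]; case: (msize q) => [|y] //= *; lia.
Qed.

Lemma degle_prod I (r : seq I) (P : pred I) (D : I -> nat) (F : I -> {mpoly R[n]}) :
  (forall i, P i -> degle (D i) (F i)) ->
  degle (\sum_(i <- r | P i) D i)%N (\prod_(i <- r | P i) F i).
Proof.
move=> h; apply: (big_ind2 (fun a p => degle a p)) => //.
  by rewrite /degle msize1.
by move=> ? ? ? ? ? ?; exact: degleM.
Qed.

Lemma degle_sum I (r : seq I) (P : pred I) D (F : I -> {mpoly R[n]}) :
  (forall i, P i -> degle D (F i)) -> degle D (\sum_(i <- r | P i) F i).
Proof.
move=> h; apply: (big_ind (degle D)) => //; first by rewrite /degle msize0.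
move=> x y; rewrite /degle => hx hy; have := msizeD_le x y; move/leq_trans; apply.
by rewrite geq_max hx hy.
Qed.

Lemma degle_sign D (b : bool) p : degle D p -> degle D ((-1) ^+ b * p).
Proof. by case: b; rewrite ?expr1 ?expr0 ?mulN1r ?mul1r // /degle msizeN. Qed.

Lemma degle_deriv D p i : degle D p -> degle D.-1 (p^`M(i)).
Proof.
rewrite /degle => h; apply: leq_trans (msize_deriv p i) _.
by case: D h => [|D] /=; case: (msize p) => //= x; lia.
Qed.

Lemma degle_msize p : degle (msize p).-1 p.
Proof. by rewrite /degle; case: (msize p). Qed.
End Deg.

Definition Jac (R : comRingType) N (Phi : N.-tuple {mpoly R[N]}) : 'M[{mpoly R[N]}]_N :=
  \matrix_(i, j) (tnth Phi i)^`M(j).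
Arguments Jac {R N}.

Lemma jac_comp (R : comRingType) N (Phi Psi : N.-tuple {mpoly R[N]}) :
  map_mx (comp_mpoly Psi) (Jac Phi) *m Jac Psi = Jac [tuple tnth Phi i \mPo Psi | i < N].
Proof.
apply/matrixP => i j; rewrite !mxE tnth_mktuple chain_all.
by apply: eq_bigr => l _; rewrite !mxE.
Qed.

Lemma jac_id (R : comRingType) N : Jac [tuple ('X_i : {mpoly R[N]}) | i < N] = 1%:M.
Proof.
apply/matrixP => i j; rewrite !mxE tnth_mktuple mderivX mnm1E.
case: eqP => [->|_]; first by rewrite submm' mpolyX0 scale1r.
by rewrite scale0r.
Qed.

Lemma comp_inv (R : comRingType) N (Phi Psi : N.-tuple {mpoly R[N]}) p :
  (forall i, tnth Psi i \mPo Phi = 'X_i) -> (p \mPo Psi) \mPo Phi = p.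
Proof.
move=> h; rewrite comp_assoc -[RHS]comp_mpoly_id; congr (p \mPo _).
by apply: eq_from_tnth => i; rewrite !tnth_mktuple h.
Qed.

Lemma det_const (K : idomainType) N (Phi : N.-tuple {mpoly K[N]}) :
  poly_automorphism Phi -> exists2 c, c != 0 & \det (Jac Phi) = c%:MP.
Proof.
case=> Psi [h1 h2].
have e : (\det (Jac Phi) \mPo Psi) * \det (Jac Psi) = 1.
  rewrite -(det_map_mx (comp_mpoly Psi)) -det_mulmx jac_comp.
  have -> : [tuple tnth Phi i \mPo Psi | i < N] = [tuple 'X_i | i < N].
    by apply: eq_from_tnth => i; rewrite !tnth_mktuple h1.
  by rewrite jac_id det1.
set a := _ \mPo Psi in e; set b := \det _ in e.
have a0 : a != 0 by apply: contra_eq_neq e => ->; rewrite mul0r eq_sym oner_neq0.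
have b0 : b != 0 by apply: contra_eq_neq e => ->; rewrite mulr0 eq_sym oner_neq0.
have : msize (a * b) = 1%N by rewrite e msize1.
rewrite msizeM // => hs.
have : msize a == 1%N.
  move: hs; rewrite -msize_poly_eq0 in a0; rewrite -msize_poly_eq0 in b0.
  move: a0 b0; case: (msize a) => [|x]; case: (msize b) => [|y] //= *; apply/eqP; lia.
case/msize_poly1P => c c0 ea; exists c => //.
by rewrite -(comp_inv (\det (Jac Phi)) h2) -/a ea comp_mpolyC.
Qed.

Lemma adj_bound (K : idomainType) n (Phi : n.+1.-tuple {mpoly K[n.+1]}) (j : 'I_n.+1) :
  degle (\sum_(i < n) ((msize (tnth Phi (lift ord_max i))).-1).-1)%N
        (\adj (Jac Phi) j ord_max).
Proof.
rewrite mxE /cofactor -signr_odd; apply: degle_sign.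
rewrite /determinant; apply: degle_sum => s _; apply: degle_sign.
apply: degle_prod => i _; rewrite !mxE.
exact/degle_deriv/degle_msize.
Qed.

Lemma step (K : idomainType) n (Phi : n.+1.-tuple {mpoly K[n.+1]})
  (hPhi : poly_automorphism Phi) (P : {mpoly K[n.+1]}) :
  P^`M(ord_max) \mPo Phi != 0 ->
  (2 <= msize (P \mPo Phi))%N /\
  ((msize (P^`M(ord_max) \mPo Phi)).-1 <=
    (msize (P \mPo Phi)).-2 + \sum_(i < n) ((msize (tnth Phi (lift ord_max i))).-1).-1)%N.
Proof.
move=> g0; set Q := P \mPo Phi; set g := P^`M(ord_max) \mPo Phi.
set S := (\sum_(i < n) _)%N.
have [c c0 ec] := det_const hPhi.
pose v : 'rV[{mpoly K[n.+1]}]_n.+1 := \row_i (P^`M(i) \mPo Phi).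
have key : c%:MP * g = \sum_j Q^`M(j) * \adj (Jac Phi) j ord_max.
  have hA := mulmxA v (Jac Phi) (\adj (Jac Phi)).
  have := congr1 (fun M : 'M[{mpoly K[n.+1]}]_(1, n.+1) => M 0 ord_max) hA.
  rewrite /= mul_mx_adj mul_mx_scalar ec mxE [in RHS]mxE => e.
  rewrite (_ : g = v 0 ord_max); last by rewrite mxE.
  rewrite e; apply: eq_bigr => j _; congr (_ * _); rewrite mxE /Q chain_all.
  by apply: eq_bigr => i _; rewrite !mxE.
have hQ : (2 <= msize Q)%N.
  rewrite ltnNge; apply/negP => hle.
  have : c%:MP * g = 0.
    rewrite key big1 // => j _.
    have := msize_deriv Q j; rewrite (_ : (msize Q).-1 = 0)%N; last by case: (msize Q) hle => [|[]].
    by rewrite leqn0 msize_poly_eq0 => /eqP ->; rewrite mul0r.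
  by move/eqP; rewrite mulf_eq0 mpolyC_eq0 (negbTE c0) (negbTE g0).
split => //.
have : degle ((msize Q).-1.-1 + S) (c%:MP * g).
  rewrite key; apply: degle_sum => j _; apply: degleM; last exact: adj_bound.
  exact/degle_deriv/degle_msize.
by rewrite /degle mul_mpolyC msizeZ //; case: (msize g).
Qed.

Lemma Phi_nonconst (K : idomainType) N (Phi : N.-tuple {mpoly K[N]}) :
  poly_automorphism Phi -> forall i, (2 <= msize (tnth Phi i))%N.
Proof.
case=> Psi [h1 _] i; rewrite ltnNge; apply/negP => /msize1_polyC e.
have := h1 i; rewrite e comp_mpolyC => /(congr1 (fun p => msize p)).
by rewrite msizeC msizeX mdeg1; case: (_ != 0).
Qed.

Unset Implicit Arguments. Set Strict Implicit.

Theorem mainTheorem13 (K : closedFieldType) (n : nat)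
  (charK : [pchar K] =i pred0)
  (Phi : n.+1.-tuple {mpoly K[n.+1]})
  (hPhi : poly_automorphism Phi)
  (P : {mpoly K[n.+1]}) (k : nat) :
  let d := fun i : 'I_n.+1 => deg1 (tnth Phi i) in
  let nabla : int := (\sum_(i < n.+1) d i)%:Z - n.+1%:Z in
  (P^`M(ord_max, k) \mPo Phi) != 0 ->
  (deg1 (P \mPo Phi))%:Z >=
    (deg1 (P^`M(ord_max, k) \mPo Phi))%:Z + (k * d ord_max)%:Z - k%:Z * nabla.
Proof.
move=> d nabla.
set S := (\sum_(i < n) ((msize (tnth Phi (lift ord_max i))).-1).-1)%N.
have hS1 : (S + n = \sum_(i < n) d (lift ord_max i))%N.
  rewrite /S -[X in (_ + X)%N](card_ord n) -sum1_card -big_split /=.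
  apply: eq_bigr => i _; rewrite /d /deg1 addn1.
  by have := Phi_nonconst hPhi (lift ord_max i); case: (msize _) => [|[]].
have hS2 : (\sum_(i < n.+1) d i = \sum_(i < n) d (lift ord_max i) + d ord_max)%N.
  rewrite big_ord_recr /=; congr (_ + _)%N; apply: eq_bigr => i _.
  congr (d _); apply: val_inj; rewrite /= /bump leqNgt ltn_ord.
  by [].
elim: k => [|k IH].
  by rewrite mderivn0 mul0n mul0r addr0 subr0.
rewrite mderivnS => g0.
have [h2 h3] := step hPhi g0.
have Gk : P^`M(ord_max, k) \mPo Phi != 0.
  by rewrite -msize_poly_eq0; move: h2; case: (msize _).
have := IH Gk; rewrite /nabla /deg1 -/S in h3 *.
move: h2 h3; rewrite -!/(deg1 _).
set a := deg1 (P^`M(ord_max, k) \mPo Phi).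
set b := deg1 (P^`M(ord_max, k)^`M(ord_max) \mPo Phi).
set c := deg1 (P \mPo Phi).
rewrite /deg1.
move=> h2 h3 h4.
have ha : (1 <= a)%N by rewrite /a /deg1; move: h2; case: (msize _) => [|[]].
rewrite hS2 -hS1 in h4 *.
rewrite -[k.+1]addn1 mulnDl mul1n (PoszD k 1) mulrDl mul1r.
move: h4; set X := (k%:Z * _); lia.
Qed.
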